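(* Let $\underline{X}$ be an observation from a distribution $P_{(\theta,\underline{\eta})}$ indexed by $(\theta,\underline{\eta})$ in a parameter space $H$, with $\theta$ a real parameter of interest, and fix $\alpha\in[0,1]$. For a confidence interval $C(\underline{X})=[L(\underline{X}),U(\underline{X})]$ for $\theta$, define its modification $C^M$ by $$T(\underline{x},\theta_0)=\min\{\theta_0-L(\underline{x}),\,U(\underline{x})-\theta_0\},\quad h(\underline{x},\theta_0)=\sup_{(\theta,\underline{\eta})\in H,\ \theta=\theta_0}P_{(\theta,\underline{\eta})}\big(T(\underline{X},\theta_0)\le T(\underline{x},\theta_0)\big),$$ $$C^M(\underline{x})=\overline{\{\theta_0: h(\underline{x},\theta_0)>\alpha\}}.$$ Let $C_0(\underline{X})$ be a $1-\alpha$ exact confidence interval for $\theta$, set $C_0^{M0}=C_0$ and $C_0^{M(k+1)}=(C_0^{Mk})^M$ for $k\ge0$, and let $C_0^{M\infty}(\underline{x})=\bigcap_{k=0}^{\infty}C_0^{Mk}(\underline{x})$. Then: (i) $C_0^{Mk}(\underline{x})$, as a set of $\theta$, is nonincreasing in $k\ge0$; (ii) $C_0^{M\infty}(\underline{X})$, which is contained in $C_0^{Mk}(\underline{X})$ for every $k$, is a $1-\alpha$ exact confidence interval; (iii) if $C_0^{Mk}(\underline{X})=C_0^{M(k+1)}(\underline{X})$ for some $k\ge0$, then $C_0^{M\infty}(\underline{X})=C_0^{Mk}(\underline{X})$.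
   Context: For a set $A$ of parameter values in $\mathbb{R}$, $\overline{A}$ denotes the smallest closed simply connected set (closed interval) containing $A$. An interval $C(\underline{X})$ for $\theta$ is ''$1-\alpha$ exact'' if $\inf_{(\theta,\underline{\eta})\in H}P_{(\theta,\underline{\eta})}(\theta\in C(\underline{X}))\ge1-\alpha$. *)

(* Defs.v *)
From HB Require Import structures.
From mathcomp Require Import all_boot all_order all_algebra.
From mathcomp Require Import all_classical all_reals all_analysis.
Set Implicit Arguments. Unset Strict Implicit. Unset Printing Implicit Defensive.
Import Order.TTheory GRing.Theory Num.Theory.
Import numFieldNormedType.Exports.
Local Open Scope classical_set_scope.
Local Open Scope ring_scope.
Local Open Scope ereal_scope.

Section ModifiedCI.
Context {R : realType}.

(* \overline{A}: the smallest closed simply connected (= closed connected)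
   subset of R containing A, i.e. the intersection of all of them. *)
Definition cl_hull (A : set R) : set R :=
  \bigcap_(B in [set B : set R | [/\ closed B, connected B & A `<=` B]]) B.

Definition Lend (C : set R) : \bar R := ereal_inf (EFin @` C).
Definition Uend (C : set R) : \bar R := ereal_sup (EFin @` C).

Definition Tstat (C : set R) (t0 : R) : \bar R :=
  mine (t0%:E - Lend C) (Uend C - t0%:E).

Context {d : measure_display} {Omega : measurableType d} {E : Type}.
Variables (H : set (R * E)) (P : R * E -> probability Omega R) (alpha : R).

Definition hfun (C : Omega -> set R) (x : Omega) (t0 : R) : \bar R :=
  ereal_sup [set P p [set y | Tstat (C y) t0 <= Tstat (C x) t0]
            | p in [set p | H p /\ p.1 = t0]].

Definition modif (C : Omega -> set R) : Omega -> set R :=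
  fun x => cl_hull [set t0 | alpha%:E < hfun C x t0].

Fixpoint Miter (k : nat) (C : Omega -> set R) : Omega -> set R :=
  match k with
  | O => C
  | S k' => modif (Miter k' C)
  end.

Definition Minf (C : Omega -> set R) : Omega -> set R :=
  fun x => \bigcap_(k in [set: nat]) Miter k C x.

Definition exact_ci (C : Omega -> set R) : Prop :=
  ((1 - alpha)%R)%:E <= ereal_inf [set P p [set x | C x p.1] | p in H].

End ModifiedCI.

(* Main.v *)
Require Import Defs.
From HB Require Import structures.
From mathcomp Require Import all_boot all_order all_algebra.
From mathcomp Require Import all_classical all_reals all_analysis.
From mathcomp Require Import lra.
Import Order.TTheory GRing.Theory Num.Theory.
Import numFieldNormedType.Exports.
Local Open Scope classical_set_scope.
Local Open Scope ring_scope.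
Local Open Scope ereal_scope.

Section S.
Variable R : realType.

Lemma T_ge0P (C : set R) t0 : closed C -> is_interval C ->
  (C t0 <-> 0 <= Tstat C t0).
Proof.
move=> cC iC; have ft : (t0%:E : \bar R) \is a fin_num by [].
rewrite /Tstat le_min !sube_ge0 ?ft ?orbT //; split.
  move=> Ct; apply/andP; split.
    by apply: ereal_inf_lbound; exists t0.
  by apply: ereal_sup_ubound; exists t0.
case/andP=> Lt tU; apply: contrapT => nCt.
have [[a Ca at0]|noa] := pselect (exists2 a, C a & (a < t0)%R).
  have [[b Cb bt0]|nob] := pselect (exists2 b, C b & (t0 < b)%R).
    by apply: nCt; apply: (iC a b) => //; rewrite !ltW.
  have ub : ubound C t0.
    move=> c Cc; rewrite leNgt; apply/negP => tc; exact: nob (ex_intro2 _ _ c Cc tc).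
  apply: nCt; apply: (itv_closed_supremums _ cC); first by exists a.
  split=> // b ubb; rewrite -lee_fin; apply: le_trans tU _.
  apply: ge_ereal_sup => _ [c Cc <-]; rewrite lee_fin; exact: ubb.
have lb : lbound C t0.
  move=> c Cc; rewrite leNgt; apply/negP => tc; exact: noa (ex_intro2 _ _ c Cc tc).
have C0 : C !=set0.
  apply/set0P/negP => /eqP C0; move: tU; rewrite C0 /Uend image_set0 ereal_sup0.
  by rewrite leeNy_eq.
apply: nCt; apply: (itv_closed_infimums C0 cC).
split=> // b lbb; rewrite -lee_fin; apply: le_trans Lt.
apply: le_ereal_inf_tmp => _ [c Cc <-]; rewrite lee_fin; exact: lbb.
Qed.

Lemma hull_sub (A : set R) : A `<=` cl_hull A.
Proof. by move=> x Ax B [_ _ AB]; exact: AB. Qed.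

Lemma hull_min (A B : set R) : closed B -> is_interval B -> A `<=` B ->
  cl_hull A `<=` B.
Proof.
move=> cB iB AB x hx; apply: hx; split => //; exact/connected_intervalP.
Qed.

Lemma hull_closed (A : set R) : closed (cl_hull A).
Proof. by apply: closed_bigI => B []. Qed.

Lemma hull_itv (A : set R) : is_interval (cl_hull A).
Proof.
move=> a b ha hb z azb B [cB cnB AB].
have iB := cnB; move/connected_intervalP: iB => iB.
by apply: (iB a b) => //; [apply: ha | apply: hb].
Qed.

Lemma lt0_ex (r : R) : (r < 0)%R -> exists n : nat, (r <= - (n.+1%:R)^-1)%R.
Proof.
move=> r0; exists (Num.truncn (- r)^-1).
have h := truncnS_gt (- r)^-1.
rewrite lerNr -[X in (_ <= X)%R](invrK (- r)%R) lef_pV2 ?ltW //.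
- by rewrite posrE.
- by rewrite posrE invr_gt0 oppr_gt0.
Qed.

Lemma approx (s : \bar R) : s != -oo -> exists u : nat -> \bar R,
  [/\ forall n, u n < s, {homo u : n m / (n <= m)%N >-> n <= m} &
      forall e, e < s -> exists n, e <= u n].
Proof.
case: s => [r| |] // _.
- exists (fun n => (r - (n.+1%:R)^-1)%:E); split.
  + by move=> n; rewrite lte_fin ltrBlDr ltrDl invr_gt0.
  + move=> n m nm; rewrite lee_fin lerB // lef_pV2 ?posrE ?ler_nat ?ltnS //.
    all: idtac.
  + case=> [q| |] //.
    * rewrite lte_fin -subr_lt0 => /lt0_ex [n hn]; exists n.
      rewrite lee_fin; move: hn; rewrite lerNr opprB => hn.
      rewrite lerBrDr addrC -lerBrDr; exact: hn.
    * by move=> _; exists 0%N; rewrite leNye.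
- exists (fun n => n%:R%:E); split.
  + by move=> n; rewrite ltey.
  + by move=> n m nm; rewrite lee_fin ler_nat.
  + case=> [q| |] //.
    * move=> _; exists (Num.truncn q).+1; rewrite lee_fin ltW //; exact: truncnS_gt.
    * by move=> _; exists 0%N; rewrite leNye.
Qed.

Lemma bigcup_le d (T : measurableType d) (mu : {measure set T -> \bar R})
  (F : nat -> set T) (a : \bar R) : (forall n, measurable (F n)) ->
  nondecreasing_seq F -> (forall n, mu (F n) <= a) -> mu (\bigcup_n F n) <= a.
Proof.
move=> mF ndF Fa.
have mU : measurable (\bigcup_n F n) by apply: bigcup_measurable => n _.
have h := @nondecreasing_cvg_mu _ _ _ mu _ mF mU ndF.
rewrite -(cvg_lim _ h) //; apply: lime_le; first exact: cvgP h.
by near=> n; exact: Fa.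
Unshelve. all: by end_near.
Qed.

Lemma pvalue d (T : measurableType d) (mu : probability T R) (f : T -> \bar R)
  (a : R) : (0 <= a)%R -> (forall t, measurable [set y | f y <= t]) ->
  exists2 E, measurable E &
    ([set x | mu [set y | f y <= f x] <= a%:E] `<=` E /\ mu E <= a%:E).
Proof.
move=> a0 mf.
pose G t := mu [set y | f y <= t].
have Gmono t1 t2 : t1 <= t2 -> G t1 <= G t2.
  move=> t12; apply: le_measure; rewrite ?inE; [exact: mf | exact: mf|].
  by move=> y /= h; exact: le_trans h t12.
pose S := [set t | G t <= a%:E].
pose s := ereal_sup S.
have [Gs|Gs] := leP (G s) a%:E.
  exists [set y | f y <= s]; first exact: mf.
  split=> // x /= Gx; exact: (@ereal_sup_ubound _ S _ Gx).
have [sNy|sn] := eqVneq s -oo.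
  exists set0; first exact: measurable0.
  split; last by rewrite measure0 lee_fin.
  move=> x /= Gx; have : f x <= s by exact: (@ereal_sup_ubound _ S _ Gx).
  rewrite sNy leeNy_eq => /eqP fx; move: Gx; rewrite fx -sNy.
  by move/(lt_le_trans Gs); rewrite ltxx.
have [u [us uh ue]] := @approx s sn.
exists (\bigcup_n [set y | f y <= u n]).
  by apply: bigcup_measurable => n _; exact: mf.
split.
  move=> x /= Gx.
  have fxs : f x <= s by exact: (@ereal_sup_ubound _ S _ Gx).
  have fxs' : f x < s.
    rewrite lt_neqAle fxs andbT; apply/eqP => fxE.
    by move: Gx; rewrite fxE => /(lt_le_trans Gs); rewrite ltxx.
  by have [n hn] := ue _ fxs'; exists n.
apply: bigcup_le.
- by move=> n; exact: mf.
- by move=> n m nm; apply/subsetPset => y /= h; exact: le_trans h (uh _ _ nm).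
- move=> n; have [y Sy uy] := ereal_sup_gt (us n).
  exact: le_trans (Gmono _ _ (ltW uy)) Sy.
Qed.

Lemma compl_le d (T : measurableType d) (mu : probability T R) (A : set T) (a : R) :
  measurable A -> ((1 - a)%R%:E <= mu A <-> mu (~` A) <= a%:E).
Proof.
move=> mA; rewrite probability_setC //.
have h0 := measure_ge0 mu A; have h1 := probability_le1 mu mA.
move: h0 h1; case: (mu A) => [r| |] //= h0 h1.
by rewrite -EFinB !lee_fin; split => ?; lra.
Qed.

Variables (d : measure_display) (Omega : measurableType d) (E : Type).
Variables (H : set (R * E)) (P : R * E -> probability Omega R) (alpha : R).

Definition ci (C : Omega -> set R) := forall x, closed (C x) /\ is_interval (C x).
Definition mT (C : Omega -> set R) :=
  forall t0 t, measurable [set y | Tstat (C y) t0 <= t].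

Lemma meas_in (C : Omega -> set R) t0 : ci C -> mT C ->
  measurable [set y | C y t0].
Proof.
move=> cC mC.
have -> : [set y | C y t0] =
  ~` \bigcup_n [set y | Tstat (C y) t0 <= (- (n.+1%:R)^-1)%R%:E].
  apply/seteqP; split => y /=.
  - move=> Cy [n _ /= hn]; have := (T_ge0P (C y) t0 (cC y).1 (cC y).2).1 Cy.
    move=> h; have := le_trans h hn; rewrite lee_fin oppr_ge0 leNgt.
    by rewrite invr_gt0 ltr0Sn.
  - move=> hy; apply/(T_ge0P (C y) t0 (cC y).1 (cC y).2); rewrite leNgt; apply/negP.
    case TE: (Tstat (C y) t0) => [r| |] //.
    + rewrite lte_fin => /lt0_ex [n hn]; apply: hy; exists n => //=.
      by rewrite TE lee_fin.
    + by move=> _; apply: hy; exists 0%N => //=; rewrite TE leNye.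
apply: measurableC; apply: bigcup_measurable => n _; exact: mC.
Qed.

Lemma modif_ci (C : Omega -> set R) : ci (modif H P alpha C).
Proof. move=> x; split; [exact: hull_closed | exact: hull_itv]. Qed.

Lemma step (C : Omega -> set R) : ci C -> mT C -> exact_ci H P alpha C ->
  forall x, modif H P alpha C x `<=` C x.
Proof.
move=> cC mC ex x; apply: hull_min; [exact: (cC x).1 | exact: (cC x).2|].
move=> t0 /= ht; apply: contrapT => nC; move: ht; apply/negP; rewrite -leNgt.
apply: ge_ereal_sup => _ [p [Hp p1] <-].
have Tx : Tstat (C x) t0 < 0.
  rewrite ltNge; apply/negP => h; apply: nC.
  exact/(T_ge0P (C x) t0 (cC x).1 (cC x).2).
have mA := meas_in C t0 cC mC.
apply: (@le_trans _ _ (P p (~` [set y | C y t0]))).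
  apply: le_measure; rewrite ?inE; [exact: mC | exact: measurableC|].
  move=> y /= hy Cy; have := (T_ge0P (C y) t0 (cC y).1 (cC y).2).1 Cy.
  by move=> h; have := le_lt_trans h (le_lt_trans hy Tx); rewrite ltxx.
apply/compl_le => //; apply: le_trans ex _; apply: ereal_inf_lbound.
by exists p => //; rewrite p1.
Qed.

Lemma exact_modif (C : Omega -> set R) : (0 <= alpha)%R -> ci C -> mT C ->
  mT (modif H P alpha C) -> exact_ci H P alpha (modif H P alpha C).
Proof.
move=> a0 cC mC mM; apply: le_ereal_inf_tmp => _ [p Hp <-].
set t0 := p.1.
have mA := meas_in (modif H P alpha C) t0 (modif_ci C) mM.
apply/compl_le => //.
have [F mF [sF PF]] := @pvalue _ _ (P p) (fun y => Tstat (C y) t0) alpha a0 (mC t0).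
apply: le_trans PF; apply: le_measure; rewrite ?inE; [exact: measurableC | exact: mF|].
move=> x /= nM; apply: sF => /=.
have : ~ (alpha%:E < hfun H P C x t0).
  by move=> h; apply: nM; apply: hull_sub.
move/negP; rewrite -leNgt; apply: le_trans; apply: ereal_sup_ubound.
by exists p.
Qed.
End S.

Theorem theorem3 (R : realType) (d : measure_display) (Omega : measurableType d)
    (E : Type) (H : set (R * E)) (P : R * E -> probability Omega R) (alpha : R)
    (L0 U0 : Omega -> R) :
  (0 <= alpha <= 1)%R ->
  (forall x, (L0 x <= U0 x)%R) ->
  let C0 := fun x => `[L0 x, U0 x]%classic in
  exact_ci H P alpha C0 ->
  (* regularity: all events of the form {T_k(X,theta0) <= t} are measurable *)
  (forall (k : nat) (t0 : R) (t : \bar R),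
      measurable [set y | Tstat (Miter H P alpha k C0 y) t0 <= t]) ->
  (* (i) *)
  (forall (k : nat) (x : Omega),
      Miter H P alpha k.+1 C0 x `<=` Miter H P alpha k C0 x) /\
  (* (ii) *)
  ((forall (k : nat) (x : Omega), Minf H P alpha C0 x `<=` Miter H P alpha k C0 x) /\
   (forall x : Omega, closed (Minf H P alpha C0 x) /\ connected (Minf H P alpha C0 x)) /\
   exact_ci H P alpha (Minf H P alpha C0)) /\
  (* (iii) *)
  (forall k : nat,
      Miter H P alpha k C0 = Miter H P alpha k.+1 C0 ->
      Minf H P alpha C0 = Miter H P alpha k C0).
Proof.
move=> /andP[a0 a1] LU C0 ex0 meas.
pose M k := Miter H P alpha k C0.
have ciM k : ci _ _ _ (M k).
  case: k => [|k] x.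
    split; last exact: interval_is_interval.
    by apply: interval_closed.
  exact: (@modif_ci _ _ _ _ H P alpha (M k) x).
have mTM k : mT _ _ _ (M k) by move=> t0 t; exact: meas.
have exM k : exact_ci H P alpha (M k).
  case: k => [|k]; first exact: ex0.
  exact: (@exact_modif _ _ _ _ H P alpha (M k) a0 (ciM k) (mTM k) (mTM k.+1)).
have stepM k x : M k.+1 x `<=` M k x.
  exact: (@step _ _ _ _ H P alpha (M k) (ciM k) (mTM k) (exM k)).
have mono m n x : (m <= n)%N -> M n x `<=` M m x.
  elim: n => [|n IH]; first by rewrite leqn0 => /eqP ->.
  rewrite leq_eqVlt => /orP[/eqP -> //|]; rewrite ltnS => mn.
  by move=> y /stepM /(IH mn).
have subInf k x : Minf H P alpha C0 x `<=` M k x by move=> y hy; exact: hy.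
split; first exact: stepM.
split.
  split; first exact: subInf.
  split.
    move=> x; split.
      by apply: closed_bigI => k _; exact: (ciM k x).1.
    apply/connected_intervalP => a b ha hb z azb k _.
    by apply: ((ciM k x).2 a b) => //; [exact: ha | exact: hb].
  apply: le_ereal_inf_tmp => _ [p Hp <-].
  have mk k : measurable [set y | M k y p.1] by apply: meas_in.
  have -> : [set x | Minf H P alpha C0 x p.1] =
            \bigcap_(k in setT) [set y | M k y p.1] by [].
  apply/compl_le.
    apply: bigcap_measurable; try (by exists 0%N); by move=> k _; exact: mk.
  rewrite setC_bigcap; apply: bigcup_le.
  - by move=> n; apply: measurableC.
  - move=> n m nm; apply/subsetPset => y /= nMn Mm; apply: nMn.
    exact: (mono n m y nm).
  - move=> n; apply/compl_le; first exact: mk.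
    apply: le_trans (exM n) _; apply: ereal_inf_lbound; by exists p.
move=> k eqk.
have eqj j : M (k + j)%N = M k.
  elim: j => [|j IH]; first by rewrite addn0.
  rewrite addnS; change (modif H P alpha (M (k + j)%N) = M k).
  rewrite IH; exact: (esym eqk).
apply/funext => x; apply/seteqP; split; first exact: subInf.
move=> y hy m _; have [km|mk] := leqP k m.
  by rewrite -(subnKC km); rewrite -/(M _) eqj.
exact: (mono m k x (ltnW mk)).
Qed.
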